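(* Let $G=(V,E)$ be a finite simple undirected graph, $\Gamma$ a subgroup of $\mathrm{Aut}(G)$, and $(G,\mathcal{C})$ the colored graph whose coloring is given by the $\Gamma$-orbits. (i) $(G,\mathcal{C})$ is $2$-path regular (satisfies (M1)) with respect to any ordering of the vertex color classes. (ii) Let $(v_{\sigma_1},\dots,v_{\sigma_p})$ be a perfect elimination ordering of $G$. Set $\eta_1=c(v_{\sigma_1})$; given $\eta_1,\dots,\eta_{k-1}$ for $2\le k\le r$, let $v_k$ be the first vertex in the peo lying in $V\setminus\bigcup_{i=1}^{k-1}V_{\eta_i}$ and set $\eta_k=c(v_k)$. Then $(V_{\eta_1},\dots,V_{\eta_r})$ is a color perfect elimination ordering. (iii) If $G$ is decomposable, then $(G,\mathcal{C})$ is CER with respect to any cpeo. (iv) If $G$ is decomposable and $\Gamma$ is generously transitive or cyclic, then $(G,\mathcal{C})$ is symmetric CER with respect to any cpeo.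
   Context: $\mathrm{Aut}(G)$: permutations $\sigma$ of $V$ with $\sigma(v)\sim\sigma(w)\iff v\sim w$. $\tilde E=E\cup\{\{v\}:v\in V\}$; $\Gamma$ acts by $\sigma\cdot\{v,w\}=\{\sigma(v),\sigma(w)\}$. Orbit coloring: vertex color classes $V_1,\dots,V_r$ are the $\Gamma$-orbits on $V$, edge color classes are the $\Gamma$-orbits on $E$; $c(v,w)$ is the color of $\{v,w\}\in\tilde E$, loops colored by the index of the vertex orbit, $c(v)=c(v,v)$. A vertex is simplicial if its neighbours form a clique; a perfect elimination ordering (peo) $(v_{\sigma_1},\dots,v_{\sigma_p})$ has each $v_{\sigma_k}$ simplicial in $G[\{v_{\sigma_k},\dots,v_{\sigma_p}\}]$. $G$ is decomposable if every induced cycle has length $3$ (equivalently, $G$ has a peo). For an ordering $(V_{\eta_1},\dots,V_{\eta_r})$: it is a color perfect elimination ordering (cpeo) if every $v\in V_{\eta_i}$ is simplicial in $G[V_{\eta_i}\cup\dots\cup V_{\eta_r}]$; $\pi(v)=i$ iff $v\in V_{\eta_i}$, $V_{\le i}=V_{\eta_1}\cup\dots\cup V_{\eta_i}$; for $\{v,w\}\in\tilde E$, $m_{v\to w}(k,h)=|\{u\in V_{\le\min(\pi(v),\pi(w))}: c(v,u)=k, c(u,w)=h\}|$, $m_{v\leftrightarrow w}(k,h)=m_{v\to w}(k,h)+m_{v\to w}(h,k)$; $F_i=\{c(v,w):\{v,w\}\in\tilde E, c(v)=c(w)=i\}$, $F=\bigcup_iF_i$. (M1): $c(v,w)=c(v',w')$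 implies $m_{v\leftrightarrow w}=m_{v'\leftrightarrow w'}$. (M2): $c(v)=c(w)$ implies $m_{v\to w}(k,h)=m_{w\to v}(k,h)$ for all $k,h\in F$. CER with respect to an ordering: cpeo and (M1); symmetric CER: additionally (M2). $\Gamma$ is generously transitive if for every orbit $V_i$ and distinct $a,b\in V_i$ there is $\sigma\in\Gamma$ swapping $a$ and $b$. *)

(* Defs.v *)
From mathcomp Require Import all_boot all_fingroup all_solvable.
Set Implicit Arguments. Unset Strict Implicit. Unset Printing Implicit Defensive.

Section ColoredGraph.
Variable T : finType.
Variable adj : rel T.
Variable Gam : {group {perm T}}.

Definition graph_aut : {set {perm T}} :=
  [set s : {perm T} | [forall v, forall w, adj (s v) (s w) == adj v w]].

Definition inEt (v w : T) : bool := (v == w) || adj v w.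

Definition vorbit (v : T) : {set T} := [set s v | s : {perm T} in Gam].
Definition orbits : {set {set T}} := [set vorbit v | v in T].

(* orbit of the (unordered) pair {v,w} under Gamma; for v = w this is the
   orbit of the loop {v}, which corresponds to the vertex orbit of v *)
Definition pcolor (v w : T) : {set {set T}} := [set [set s v; s w] | s : {perm T} in Gam].

Definition ecolor (v w : T) : option {set {set T}} :=
  if inEt v w then Some (pcolor v w) else None.

Definition vcolor (v : T) : {set {set T}} := pcolor v v.

Definition class_ordering (s : seq {set T}) : bool :=
  uniq s && (perm_eq s (enum orbits)).

(* pi(v) (0-based): position of the class of v in the ordering *)
Definition piC (s : seq {set T}) (v : T) : nat := index (vorbit v) s.

Definition simplicial (S : {set T}) (v : T) : Prop :=
  {in S &, forall x y, adj v x -> adj v y -> x != y -> adj x y}.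

Definition cpeo (s : seq {set T}) : Prop :=
  class_ordering s /\
  forall v, simplicial [set u | piC s v <= piC s u] v.

Definition mto (s : seq {set T}) (v w : T) (k h : {set {set T}}) : nat :=
  #|[set u | (piC s u <= minn (piC s v) (piC s w))
             && (ecolor v u == Some k) && (ecolor u w == Some h)]|.

Definition mboth (s : seq {set T}) (v w : T) (k h : {set {set T}}) : nat :=
  mto s v w k h + mto s v w h k.

Definition inF (k : {set {set T}}) : Prop :=
  exists v w, ecolor v w = Some k /\ vcolor v = vcolor w.

Definition M1 (s : seq {set T}) : Prop :=
  forall v w v' w', inEt v w -> inEt v' w' ->
    ecolor v w = ecolor v' w' ->
    forall k h, mboth s v w k h = mboth s v' w' k h.

Definition M2 (s : seq {set T}) : Prop :=
  forall v w, inEt v w -> vcolor v = vcolor w ->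
    forall k h, inF k -> inF h -> mto s v w k h = mto s w v k h.

Definition CER (s : seq {set T}) : Prop := cpeo s /\ M1 s.
Definition symCER (s : seq {set T}) : Prop := CER s /\ M2 s.

Definition peo (p : seq T) : Prop :=
  perm_eq p (enum T) /\
  forall k, k < size p -> forall x0,
    simplicial [set u in drop k p] (nth x0 p k).

Fixpoint eta_order (p : seq T) (k : nat) : seq {set T} :=
  match k with
  | 0 => [::]
  | k'.+1 =>
      let prev := eta_order p k' in
      match [seq v <- p | ~~ has (fun C : {set T} => v \in C) prev] with
      | [::] => prev
      | v :: _ => rcons prev (vorbit v)
      end
  end.

Definition induced_cycle (n : nat) (f : 'I_n -> T) : Prop :=
  3 <= n /\ injective f /\
  forall i j : 'I_n,
    adj (f i) (f j) = (val j == i.+1 %% n) || (val i == j.+1 %% n).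

Definition decomposable : Prop :=
  forall n (f : 'I_n -> T), induced_cycle f -> n = 3.

Definition generously_transitive : Prop :=
  forall a b, b \in vorbit a -> a != b ->
    exists2 s, s \in Gam & s a = b /\ s b = a.

End ColoredGraph.

(* Main.v *)
Require Import Defs.
From mathcomp Require Import all_boot all_fingroup all_solvable.
From mathcomp Require Import zify.
Set Implicit Arguments. Unset Strict Implicit. Unset Printing Implicit Defensive.

Section Helpers.
Variable T : finType.
Variable adj : rel T.
Variable Gam : {group {perm T}}.
Hypothesis adj_sym : symmetric adj.
Hypothesis Gsub : Gam \subset graph_aut adj.

Lemma autP (t : {perm T}) a b : t \in Gam -> adj (t a) (t b) = adj a b.
Proof.
move=> tG; have := subsetP Gsub t tG; rewrite inE => /forallP /(_ a) /forallP /(_ b).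
by move/eqP.
Qed.

Lemma imset_transl (X : finType) (F : {perm T} -> X) (t : {perm T}) :
  t \in Gam -> [set F (t * u)%g | u in Gam] = [set F u | u in Gam].
Proof.
move=> tG; apply/setP => x; apply/imsetP/imsetP => [[u uG ->]|[u uG ->]].
  by exists (t * u)%g; rewrite ?groupM.
by exists (t^-1 * u)%g; rewrite ?groupM ?groupV ?mulKVg.
Qed.

Lemma vorbitP u v : reflect (exists2 t, t \in Gam & u = t v) (u \in vorbit Gam v).
Proof. exact: imsetP. Qed.

Lemma mem_vorbit t v : t \in Gam -> t v \in vorbit Gam v.
Proof. by move=> tG; apply/vorbitP; exists t. Qed.

Lemma vorbit_refl v : v \in vorbit Gam v.
Proof. by rewrite -{1}(perm1 v); apply: mem_vorbit. Qed.

Lemma vorbit_act t v : t \in Gam -> vorbit Gam (t v) = vorbit Gam v.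
Proof.
move=> tG; rewrite /vorbit -(imset_transl (fun u => u v) tG).
by apply: eq_imset => u; rewrite permM.
Qed.

Lemma vorbit_eq u v : u \in vorbit Gam v -> vorbit Gam u = vorbit Gam v.
Proof. by case/vorbitP => t tG ->; apply: vorbit_act. Qed.

Lemma piC_act s t v : t \in Gam -> piC Gam s (t v) = piC Gam s v.
Proof. by move=> tG; rewrite /piC vorbit_act. Qed.

Lemma pcolor_act t a b : t \in Gam -> pcolor Gam (t a) (t b) = pcolor Gam a b.
Proof.
move=> tG; rewrite /pcolor -(imset_transl (fun u => [set u a; u b]) tG).
by apply: eq_imset => u; rewrite !permM.
Qed.

Lemma ecolor_act t a b : t \in Gam -> ecolor adj Gam (t a) (t b) = ecolor adj Gam a b.
Proof.
by move=> tG; rewrite /ecolor /inEt (inj_eq perm_inj) autP // pcolor_act.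
Qed.

Lemma pcolorC a b : pcolor Gam a b = pcolor Gam b a.
Proof. by apply: eq_imset => u; rewrite setUC. Qed.

Lemma inEtC a b : inEt adj a b = inEt adj b a.
Proof. by rewrite /inEt eq_sym adj_sym. Qed.

Lemma ecolorC a b : ecolor adj Gam a b = ecolor adj Gam b a.
Proof. by rewrite /ecolor inEtC pcolorC. Qed.

Lemma mto_act s t v w k h : t \in Gam ->
  mto adj Gam s (t v) (t w) k h = mto adj Gam s v w k h.
Proof.
move=> tG; rewrite /mto -(card_preimset _ (@perm_inj _ t)); apply: eq_card => u.
by rewrite !inE !piC_act // !ecolor_act.
Qed.

Lemma mtoC s v w k h : mto adj Gam s w v k h = mto adj Gam s v w h k.
Proof.
rewrite /mto minnC; apply: eq_card => u; rewrite !inE.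
have E1 := ecolorC w u. have E2 := ecolorC u v.
move: (ecolor adj Gam w u) (ecolor adj Gam u w) (ecolor adj Gam u v) (ecolor adj Gam v u) E1 E2 => a b c d -> ->.
by case: (_ <= _) => //=; rewrite andbC.
Qed.

Lemma mbothC s v w k h : mboth adj Gam s w v k h = mboth adj Gam s v w k h.
Proof. by rewrite /mboth (mtoC s v w k h) (mtoC s v w h k) addnC. Qed.

Lemma mboth_act s t v w k h : t \in Gam ->
  mboth adj Gam s (t v) (t w) k h = mboth adj Gam s v w k h.
Proof. by move=> tG; rewrite /mboth !mto_act. Qed.

Lemma pcolor_self a b : [set a; b] \in pcolor Gam a b.
Proof. by apply/imsetP; exists 1%g; rewrite ?group1 ?perm1. Qed.

Lemma M1_all s : M1 adj Gam s.
Proof.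
move=> v w v' w' h1 h2; rewrite /ecolor h1 h2 => -[E] k h.
have := pcolor_self v' w'; rewrite -E => /imsetP [t tG Et].
have m1 : v' \in [set t v; t w] by rewrite -Et set21.
have m2 : w' \in [set t v; t w] by rewrite -Et in_set2 eqxx orbT.
have m3 : t v \in [set v'; w'] by rewrite Et set21.
have m4 : t w \in [set v'; w'] by rewrite Et in_set2 eqxx orbT.
move: m1 m2 m3 m4; rewrite !in_set2 => /orP[] /eqP e1 /orP[] /eqP e2; subst v' w'.
- by move=> _ /orP[] /eqP/perm_inj ->; rewrite mboth_act.
- by rewrite mboth_act.
- by rewrite mbothC mboth_act.
- by move=> /orP[] /eqP/perm_inj -> _; rewrite mboth_act.
Qed.


Lemma vcolor_orbit v w : vcolor Gam v = vcolor Gam w -> w \in vorbit Gam v.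
Proof.
rewrite /vcolor => E; have := pcolor_self w w; rewrite -E => /imsetP [t tG Et].
have : w \in [set t v; t v] by rewrite -Et set21.
by rewrite in_set2 orbb => /eqP ->; apply: mem_vorbit.
Qed.

Lemma ecolor_some a b k : ecolor adj Gam a b = Some k -> pcolor Gam a b = k.
Proof. by rewrite /ecolor; case: ifP => // _ [->]. Qed.

Lemma inF_orbit k v u : inF adj Gam k -> ecolor adj Gam v u = Some k ->
  u \in vorbit Gam v.
Proof.
case=> a [b [Eab Vab]] Evu.
have bo := vcolor_orbit Vab.
have E : pcolor Gam v u = pcolor Gam a b by rewrite (ecolor_some Eab) (ecolor_some Evu).
have := pcolor_self v u; rewrite E => /imsetP [t tG Et].
have key x : x \in [set v; u] -> vorbit Gam x = vorbit Gam a.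
  rewrite Et in_set2 => /orP[] /eqP ->; rewrite vorbit_act //.
  exact: vorbit_eq.
have -> : vorbit Gam v = vorbit Gam u by rewrite !key ?set21 ?in_set2 ?eqxx ?orbT.
exact: vorbit_refl.
Qed.

Lemma M2_gt s : generously_transitive Gam -> M2 adj Gam s.
Proof.
move=> gt v w _ Vvw k h _ _.
case: (eqVneq v w) => [-> // | ne].
have [t tG [e1 e2]] := gt v w (vcolor_orbit Vvw) ne.
transitivity (mto adj Gam s (t v) (t w) k h); first by rewrite mto_act.
by rewrite e1 e2.
Qed.

Lemma mto_le s v w k h : abelian Gam -> w \in vorbit Gam v -> inF adj Gam k ->
  mto adj Gam s v w k h <= mto adj Gam s w v k h.
Proof.
move=> ab /vorbitP [tau tauG ->] Fk.
have commf a b x : a \in Gam -> b \in Gam -> a (b x) = b (a x).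
  move=> aG bG; have c : commute a b by exact: (centsP ab) _ aG _ bG.
  by rewrite -!permM c.
pose rho u := odflt 1%g [pick r in Gam | r v == u].
have rhoP u : u \in vorbit Gam v -> rho u \in Gam /\ rho u v = u.
  case/vorbitP => r rG ->; rewrite /rho; case: pickP => [r' /andP[r'G /eqP ->] //|].
  by move/(_ r); rewrite rG eqxx.
pose f u := (rho u)^-1%g (tau v).
rewrite /mto -(card_in_imset (f := f)); last first.
  move=> u1 u2; rewrite !inE => /andP[/andP[_ /eqP/(inF_orbit Fk) o1] _].
  move=> /andP[/andP[_ /eqP/(inF_orbit Fk) o2] _].
  have [r1G r1v] := rhoP _ o1; have [r2G r2v] := rhoP _ o2.
  rewrite /f => H.
  have H2 : rho u1 (rho u2 ((rho u1)^-1%g (tau v))) = rho u1 (rho u2 ((rho u2)^-1%g (tau v))).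
    by rewrite H.
  rewrite permKV (commf (rho u2)) ?groupV // permKV in H2.
  move: H2; rewrite (commf (rho u2)) // (commf (rho u1)) // r1v r2v.
  by move/perm_inj.
apply: subset_leq_card; apply/subsetP => x /imsetP [u]; rewrite !inE.
move=> /andP[/andP[_ /eqP Evu] /eqP Euw] ->.
have o := inF_orbit Fk Evu; have [rG rv] := rhoP _ o.
rewrite /f; move: (rho u) rG rv => r rG rv; subst u.
rewrite !piC_act ?groupV // minnn leqnn /=.
apply/andP; split; apply/eqP.
- have bG : ((r^-1 * tau)%g) \in Gam by rewrite groupM ?groupV.
  have -> : tau v = (r^-1 * tau)%g (r v) by rewrite permM permK.
  have -> : r^-1%g ((r^-1 * tau)%g (r v)) = (r^-1 * tau)%g v.
    by rewrite !permM permK (commf _ tau) ?groupV.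
  by rewrite ecolor_act // ecolorC.
- transitivity (ecolor adj Gam (r^-1%g (tau v)) (r^-1%g (r v))); first by rewrite permK.
  rewrite ecolor_act ?groupV //. by rewrite ecolorC.
Qed.


Definition cov (S : seq {set T}) (v : T) := has (fun C : {set T} => v \in C) S.

Definition orbs (S : seq {set T}) := forall C, C \in S -> exists x, C = vorbit Gam x.

Lemma covE S v : orbs S -> cov S v = (vorbit Gam v \in S).
Proof.
move=> oS; apply/hasP/idP => [[C CS vC]|vS]; last by exists (vorbit Gam v); rewrite ?vorbit_refl.
have [x Cx] := oS C CS; rewrite Cx in vC; by rewrite (vorbit_eq vC) -Cx.
Qed.

Lemma filter_head_index (a : pred T) (p r : seq T) x u :
  [seq y <- p | a y] = x :: r -> u \in p -> a u -> index x p <= index u p.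
Proof.
elim: p => [//|y p IH] /=; case: ifP => ay.
  by case=> <- _ _ _; rewrite /= eqxx.
move=> E; rewrite in_cons => /orP[/eqP -> | up] au; first by rewrite au in ay.
have xp : x \in [seq y <- p | a y] by rewrite E mem_head.
rewrite mem_filter in xp; case/andP: xp => ax _.
have -> : (y == x) = false by apply/negbTE/eqP => yx; rewrite yx ax in ay.
have -> : (y == u) = false by apply/negbTE/eqP => yx; rewrite yx au in ay.
by rewrite ltnS IH.
Qed.

Lemma mem_drop_index (p : seq T) j u : u \in p -> j <= index u p -> u \in drop j p.
Proof.
move=> up ju; have E := nth_index u up.
have lt : index u p < size p by rewrite index_mem.
have -> : u = nth u (drop j p) (index u p - j) by rewrite nth_drop subnKC.
apply: mem_nth; rewrite size_drop; apply: ltn_sub2r => //; exact: leq_ltn_trans ju lt.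
Qed.

Definition eta_inv (p : seq T) (k : nat) (S : seq {set T}) : Prop :=
  [/\ uniq S, orbs S,
   (forall i, i < size S -> exists x, [/\ nth set0 S i = vorbit Gam x, x \in p &
        forall u, i <= index (vorbit Gam u) S -> index x p <= index u p]) &
   ((exists u, ~~ cov S u) -> size S = k)].

Lemma eta_inv_all (p : seq T) k : (forall u, u \in p) -> eta_inv p k (eta_order Gam p k).
Proof.
move=> allp; elim: k => [|k [uS oS bS cS]] /=.
  by split => // [C|i] //; rewrite in_nil.
set S := eta_order Gam p k in uS oS bS cS *.
case E: [seq v <- p | ~~ has (fun C : {set T} => v \in C) S] => [|x r].
  split => //; case=> u nu; move: E; have : u \in [seq v <- p | ~~ has (fun C : {set T} => v \in C) S].
    by rewrite mem_filter nu allp.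
  by move=> + E; rewrite E.
have : x \in [seq v <- p | ~~ has (fun C : {set T} => v \in C) S] by rewrite E mem_head.
rewrite mem_filter => /andP [nx xp].
have nxS : vorbit Gam x \notin S by rewrite -covE.
have idx C : index C (rcons S (vorbit Gam x)) =
    if C \in S then index C S else size S + (C != vorbit Gam x).
  by rewrite -cats1 index_cat /= eq_sym; case: (C == vorbit Gam x).
split.
- by rewrite rcons_uniq nxS.
- by move=> C; rewrite mem_rcons in_cons => /orP[/eqP ->|]; [exists x | apply: oS].
- move=> i; rewrite size_rcons ltnS leq_eqVlt => /orP[/eqP ->|iS].
    exists x; split => //; first by rewrite nth_rcons ltnn eqxx.
    move=> u; rewrite idx; case: ifP => [uS'|uS']; first by rewrite leqNgt index_mem uS'.
    move=> _; apply: (filter_head_index E) => //.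
    by rewrite /= -/(cov S u) covE // uS'.
  have [y [ny yp hy]] := bS i iS; exists y; split => //; first by rewrite nth_rcons iS.
  move=> u; rewrite idx; case: ifP => [_|uS']; first exact: hy.
  by move=> _; apply: hy; rewrite memNindex ?uS' // ltnW.
- case=> u; rewrite /cov has_rcons negb_or => /andP [_ nu].
  by rewrite size_rcons cS //; exists u.
Qed.


Lemma cpeo_eta p : peo adj p -> cpeo adj Gam (eta_order Gam p #|orbits Gam|).
Proof.
case=> pp psimp.
have allp u : u \in p by rewrite (perm_mem pp) mem_enum.
have [uS oS bS cS] := eta_inv_all #|orbits Gam| allp.
set S := eta_order Gam p _ in uS oS bS cS *.
have orbS C : C \in S -> C \in orbits Gam by move=> /oS [x ->]; apply/imsetP; exists x.
have memS : S =i enum (orbits Gam).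
  case: (boolP [exists u, ~~ cov S u]) => [/existsP [u nu] | /existsPn allc].
    have sz := cS (ex_intro _ u nu).
    have sub : {subset S <= enum (orbits Gam)} by move=> C /orbS; rewrite mem_enum.
    by have [] := uniq_min_size uS sub; first by rewrite -cardE sz.
  move=> C; rewrite mem_enum; apply/idP/idP => [/orbS //|/imsetP [v _ ->]].
  by rewrite -covE //; have := allc v; rewrite negbK.
have cls : class_ordering Gam S.
  by rewrite /class_ordering uS /=; apply: uniq_perm; rewrite ?enum_uniq.
split => // v.
set i := piC Gam S v.
have vS : vorbit Gam v \in S by rewrite memS mem_enum; apply/imsetP; exists v.
have iS : i < size S by rewrite /i /piC index_mem.
have [x [nx xp hx]] := bS i iS.
have vx : v \in vorbit Gam x by rewrite -nx /i /piC nth_index // vorbit_refl.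
case/vorbitP: vx => t tG vt.
have jp : index x p < size p by rewrite index_mem.
have sx := psimp _ jp x; rewrite nth_index // in sx.
move=> a b; rewrite !inE => aS bS0 va vb ab.
have inD y : i <= piC Gam S y -> y \in [set u in drop (index x p) p].
  by move=> hy; rewrite inE; apply: mem_drop_index => //; apply: hx.
have a' : i <= piC Gam S (t^-1%g a) by rewrite piC_act ?groupV.
have b' : i <= piC Gam S (t^-1%g b) by rewrite piC_act ?groupV.
have e1 y : adj x (t^-1%g y) = adj v y by rewrite -(autP x (t^-1%g y) tG) permKV -vt.
have := sx _ _ (inD _ a') (inD _ b'); rewrite !e1 => /(_ va vb).
rewrite (inj_eq perm_inj) -(autP _ _ tG) !permKV; exact.
Qed.

Lemma M2_cyc s : abelian Gam -> M2 adj Gam s.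
Proof.
move=> ab v w _ Vvw k h Fk _.
have wo := vcolor_orbit Vvw.
have vo : v \in vorbit Gam w by rewrite (vorbit_eq wo) vorbit_refl.
by apply/anti_leq; rewrite !mto_le.
Qed.

End Helpers.

Theorem lemma3p11 (T : finType) (adj : rel T) (Gam : {group {perm T}}) :
  symmetric adj -> irreflexive adj -> Gam \subset graph_aut adj ->
  [/\ (forall s, class_ordering Gam s -> M1 adj Gam s),
      (forall p, peo adj p -> cpeo adj Gam (eta_order Gam p #|orbits Gam|)),
      (decomposable adj -> forall s, cpeo adj Gam s -> CER adj Gam s) &
      (decomposable adj -> generously_transitive Gam \/ cyclic Gam ->
         forall s, cpeo adj Gam s -> symCER adj Gam s)].
Proof.
move=> sym _ sub; split.
- by move=> s _; apply: M1_all.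
- by move=> p; apply: cpeo_eta.
- by move=> _ s cp; split => //; apply: M1_all.
- move=> _ gc s cp; split; first by split => //; apply: M1_all.
  case: gc => [gt | cyc]; first by apply: M2_gt.
  by apply: M2_cyc => //; apply: cyclic_abelian.
Qed.
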